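(* Let $\chi\ge3$, let $s_1\ge s_2\ge\dots\ge s_\chi\ge0$, $\mathsf S=\mathrm{diag}(s_1,\dots,s_\chi)$, let $\mathcal N_L,\mathcal N_R$ be real numbers, $\mathbf p_R\in\mathbb C^{1\times\chi}$ a row vector and $\mathbf p_L\in\mathbb C^{\chi\times1}$ a column vector, and consider the $(\chi+2)\times(\chi+2)$ matrix $$M=\begin{pmatrix}\mathcal N_R&\mathbf p_R&0\\0&\mathsf S&\mathbf p_L\\0&0&\mathcal N_L\end{pmatrix}.$$ Denote the singular values of $M$ by $\lambda_{-1}\ge\lambda_0\ge\lambda_1\ge\dots\ge\lambda_\chi\ge0$. Then $s_a\ge\lambda_a\ge s_{a+2}$ for every $a\in\{1,\dots,\chi-2\}$. *)

(* Defs.v *)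
From HB Require Import structures.
From mathcomp Require Import all_boot all_order all_algebra.
From mathcomp Require Import complex.
Set Implicit Arguments. Unset Strict Implicit. Unset Printing Implicit Defensive.
Import Order.TTheory GRing.Theory Num.Theory.
Local Open Scope ring_scope.

Definition adjmx (R : rcfType) (m n : nat) (A : 'M[R[i]]_(m, n)) : 'M[R[i]]_(n, m) :=
  map_mx (@conjc R) A^T.

(* The eigenvalues of a square complex matrix, listed with (algebraic)
   multiplicity: the roots of its (monic) characteristic polynomial. *)
Definition eigenvalues_seq (R : rcfType) (n : nat) (A : 'M[R[i]]_n) : seq R[i] :=
  sval (closed_field_poly_normal (char_poly A)).

(* Singular values of M : the square roots of the eigenvalues of M^* M
   (which are real and nonnegative), with multiplicity, sorted in
   nonincreasing order. *)
Definition singular_values (R : rcfType) (m n : nat) (M : 'M[R[i]]_(m, n)) : seq R :=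
  sort (fun x y : R => y <= x)
    [seq Num.sqrt (complex.Re z) | z <- eigenvalues_seq (adjmx M *m M)].

(* The (chi+2) x (chi+2) matrix
      ( N_R  p_R  0  )
      ( 0    S    p_L)
      ( 0    0    N_L)
   with S = diag(s_1, ..., s_chi). *)
Definition transfer_mx (R : rcfType) (chi : nat) (NR NL : R) (s : 'I_chi -> R)
    (pR : 'rV[R[i]]_chi) (pL : 'cV[R[i]]_chi) : 'M[R[i]]_(1 + chi + 1) :=
  block_mx
    (block_mx (NR%:C)%C%:M pR 0 (diag_mx (\row_i (s i)%:C%C)))
    (col_mx 0 pL)
    0
    (NL%:C)%C%:M.

(* Main.v *)
Require Import Defs.
From HB Require Import structures.
From mathcomp Require Import all_boot all_order all_algebra.
From mathcomp Require Import complex.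
From mathcomp Require Import spectral sesquilinear.
From mathcomp Require Import zify ring lra.
Import Order.TTheory GRing.Theory Num.Theory.
Import Num.Def.
Local Open Scope ring_scope.

Definition mid chi (q : 'I_chi) : 'I_(1 + chi + 1) := lshift 1 (rshift 1 q).
Arguments mid {chi}.
Definition lst chi : 'I_(1 + chi + 1) := rshift (1 + chi) (ord0 : 'I_1).
Definition fst chi : 'I_(1 + chi + 1) := lshift 1 (lshift chi (ord0 : 'I_1)).

Lemma ord_cases chi (r : 'I_(1 + chi + 1)) :
  r = fst chi \/ (exists q : 'I_chi, r = mid q) \/ r = lst chi.
Proof.
rewrite -(splitK r); case: (split r) => [j|j] /=; last first.
  by right; right; rewrite (ord1 j).
rewrite -(splitK j); case: (split j) => [j'|j'] /=.
  by left; rewrite (ord1 j').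
by right; left; exists j'.
Qed.

Lemma M_mid (R : rcfType) chi NR NL (s : 'I_chi -> R) pR pL (q : 'I_chi) (c : 'I_(1 + chi + 1)) :
  transfer_mx NR NL s pR pL (mid q) c =
  if c == mid q then (s q)%:C%C else if c == lst chi then pL q 0 else 0.
Proof.
rewrite /transfer_mx /mid.
case: (@ord_cases chi c) => [->|[[q' ->]|->]].
- by rewrite /fst block_mxEul block_mxEdl mxE.
- rewrite block_mxEul block_mxEdr mxE.
  rewrite -!val_eqE /= mxE eqn_add2l; case: eqP => [/val_inj e|ne].
    by rewrite e mulr1n eqxx.
  rewrite mulr0n; case: ifP => [/eqP e|_]; first by exfalso; apply: ne; rewrite e.
  case: ifP => // /eqP; have := ltn_ord q'; lia.
- rewrite /lst block_mxEur col_mxEd (ord1 (ord0 : 'I_1)).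
  rewrite -!val_eqE /= eqxx; case: ifP => // /eqP; have := ltn_ord q; lia.
Qed.

Lemma M_lst (R : rcfType) chi NR NL (s : 'I_chi -> R) pR pL (c : 'I_(1 + chi + 1)) :
  transfer_mx NR NL s pR pL (lst chi) c =
  if c == lst chi then NL%:C%C else 0.
Proof.
rewrite /transfer_mx /lst.
case: (@ord_cases chi c) => [->|[[q' ->]|->]].
- by rewrite /fst block_mxEdl mxE.
- by rewrite /mid block_mxEdl mxE -?val_eqE /=; case: ifP => // /eqP; have := ltn_ord q'; lia.
- by rewrite block_mxEdr mxE /lst !eqxx mulr1n.
Qed.
Local Notation "M ^H" := (map_mx conjC (M^T)) (at level 2).

Lemma normsq (C : numClosedFieldType) n (y : 'rV[C]_n) :
  (y *m y^H) 0 0 = \sum_j `|y 0 j| ^+ 2.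
Proof. by rewrite mxE; apply: eq_bigr => j _; rewrite !mxE normCK. Qed.

Lemma qA (C : numClosedFieldType) n m (M : 'M[C]_(m, n)) (x : 'rV[C]_n) :
  x *m (M^H *m M) *m x^H = (x *m M^H) *m (x *m M^H)^H.
Proof. by rewrite trmx_mul map_mxM trmxCK !mulmxA. Qed.

Lemma ker_col (C : numClosedFieldType) n m (G : 'M[C]_(n, m)) (x : 'rV[C]_n)
   (c : 'I_m) (v : nat) (r : 'I_n) :
  (forall r', G r' c = (val r' == v)%:R) -> (x *m G) 0 c = 0 -> val r = v -> x 0 r = 0.
Proof.
move=> hG + e; rewrite mxE (bigD1 r) //= big1 ?addr0 => [|r' ne]; last first.
  rewrite hG; case: eqP => [e'|]; last by rewrite mulr0.
  by case/eqP: ne; apply: val_inj; rewrite /= e e'.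
by rewrite hG e eqxx mulr1.
Qed.

Lemma quad_diag (C : numClosedFieldType) n (P : 'M[C]_n) (d : 'rV[C]_n) (x : 'rV[C]_n) :
  P \is unitarymx ->
  (x *m (invmx P *m diag_mx d *m P) *m x^H) 0 0 =
  \sum_i d 0 i * `|(x *m P^H) 0 i| ^+ 2.
Proof.
move=> Pu; rewrite invmx_unitary //.
set a := x *m P^H.
have ax : x = a *m P by rewrite /a mulmxKtV.
have xH' : x^H = P^H *m a^H by rewrite ax trmx_mul map_mxM.
rewrite xH' !mulmxA -/a (mulmxtVK _ Pu) mul_mx_diag mxE.
by apply: eq_bigr => i _; rewrite !mxE normCK; ring.
Qed.

Lemma diag_mxN' (C : numClosedFieldType) n (d : 'rV[C]_n) : diag_mx (- d) = - diag_mx d.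
Proof. by apply/matrixP => i j; rewrite !mxE mulNrn. Qed.
Lemma exists_ker (F : fieldType) n m k (G : 'M[F]_(n, m)) (H : 'M[F]_(n, k)) :
  (m + k < n)%N -> exists2 x : 'rV[F]_n, x != 0 & x *m G = 0 /\ x *m H = 0.
Proof.
move=> lt.
set U := (kermx G :&: kermx H)%MS.
have hsc := mxrank_sum_cap (kermx G) (kermx H).
have hs : (\rank (kermx G + kermx H)%MS <= n)%N by apply: rank_leq_col.
have hG := rank_leq_col G; have hH := rank_leq_col H.
rewrite !mxrank_ker in hsc.
have : \rank U != 0%N by rewrite /U; lia.
rewrite mxrank_eq0 -nz_row_eq0 => nz.
exists (nz_row U) => //.
have s := nz_row_sub U.
split; apply/sub_kermxP; apply: (submx_trans s); rewrite /U ?capmxSl ?capmxSr //.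
Qed.


Lemma core (C : numClosedFieldType) n m (P : 'M[C]_n) (d : 'rV[C]_n) (c : C)
    (G : 'M[C]_(n, m)) :
  P \is unitarymx -> (forall i, d 0 i \is Num.real) -> c \is Num.real ->
  (forall x : 'rV_n, x *m G = 0 ->
     c * (x *m x^H) 0 0 <= (x *m (invmx P *m diag_mx d *m P) *m x^H) 0 0) ->
  (n <= m + #|[set i | (c <= d 0 i)%R]|)%N.
Proof.
move=> Pu dR cR hyp.
rewrite leqNgt; apply/negP => lt.
set S := [set i | c <= d 0 i] in lt.
pose E : 'M[C]_(n, #|S|) := \matrix_(r, j) (r == enum_val j)%:R.
have [x nz [xG xH]] := @exists_ker _ _ _ _ G (P^H *m E) lt.
have := hyp x xG.
rewrite invmx_unitary //.
set a := x *m P^H.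
have ax : x = a *m P by rewrite /a mulmxKtV.
have aS : forall i, i \in S -> a 0 i = 0.
  move=> i iS; have := congr1 (fun M : 'M_(1, #|S|) => M 0 (enum_rank_in iS i)) xH.
  have e := enum_rankK_in iS iS.
  rewrite mulmxA -/a mxE (bigD1 i) //= big1 => [|j ji]; last first. 
    by rewrite /E !mxE e (negbTE ji) mulr0.
  by rewrite /E !mxE e eqxx mulr1 addr0.
have xH' : x^H = P^H *m a^H.
  by rewrite ax trmx_mul map_mxM.
have e1 : x *m (P^H *m diag_mx d *m P) *m x^H = a *m diag_mx d *m a^H.
  by rewrite xH' !mulmxA -/a (mulmxtVK _ Pu).
have e2 : x *m x^H = a *m a^H.
  by rewrite xH' mulmxA.
clearbody a.
rewrite e1 e2 mul_mx_diag !mxE mulr_sumr -subr_ge0 -sumrB.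
rewrite (eq_bigr (fun i => (d 0 i - c) * `|a 0 i|^+2)) => [hq|i _]; last first.
  by rewrite !mxE normCK; ring.
have [i0 ai0] : exists i, a 0 i != 0.
  case: (pickP (fun i => a 0 i != 0)) => [i0 h|h]; first by exists i0.
  have a0 : a = 0.
    apply/rowP => i; move: (h i) => /negbFE/eqP ->; by rewrite mxE.
  by move/negP: nz; case; rewrite ax a0 mul0mx.
have i0S : i0 \notin S by apply/negP => /aS; apply/eqP.
have key : forall i, i \notin S -> d 0 i - c < 0.
  move=> i; rewrite inE => h; rewrite subr_lt0 real_ltNge //.
move: hq; rewrite (bigD1 i0) //= => hq.
suff H : (d 0 i0 - c) * `|a 0 i0| ^+ 2 + \sum_(i < n | i != i0) (d 0 i - c) * `|a 0 i| ^+ 2 < 0.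
  by move: (lt_geF H); rewrite hq.
apply: (@le_lt_trans _ _ ((d 0 i0 - c) * `|a 0 i0| ^+ 2 + 0)).
  rewrite lerD2l; apply: sumr_le0 => i _.
  case: (boolP (i \in S)) => iS.
    by rewrite aS // normr0 expr0n mulr0.
  by rewrite nmulr_rle0 ?key // exprn_ge0 //.
by rewrite addr0 nmulr_rlt0 ?key // exprn_gt0 // normr_gt0 //.
Qed.
Lemma sorted_ge_nth (R : realDomainType) (L : seq R) i j :
  sorted (fun x y => y <= x) L -> (i <= j)%N -> (j < size L)%N ->
  nth 0 L j <= nth 0 L i.
Proof.
move=> so ij jL.
have tr : transitive (fun x y : R => y <= x).
  move=> x y z /= h1 h2; exact: le_trans h2 h1.
have rf : reflexive (fun x y : R => y <= x) by move=> x /=.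
apply: (@sorted_leq_nth _ (fun x y : R => y <= x) tr rf 0 L so i j) => //; rewrite inE /=; lia.
Qed.

Lemma nth_lb (R : realDomainType) (L : seq R) (t : R) j :
  sorted (fun x y => y <= x) L -> (j < size L)%N ->
  (j < count (fun v => (t <= v)%R) L)%N -> t <= nth 0 L j.
Proof.
move=> so jL cnt; rewrite leNgt; apply/negP => lt.
move: cnt; rewrite -[L in count _ L](cat_take_drop j) count_cat.
have -> : count (fun v => (t <= v)%R) (drop j L) = 0%N.
  apply/eqP; rewrite -leqn0 leqNgt -has_count; apply/hasPn => v.
  move=> /(nthP 0) [q qs <-]; rewrite nth_drop -ltNge.
  rewrite size_drop in qs.
  apply: le_lt_trans lt; apply: sorted_ge_nth => // => //; [lia | by rewrite -ltn_subRL].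
have cs : (count (fun v => (t <= v)%R) (take j L) <= j)%N.
  by rewrite (leq_trans (count_size _ _)) // size_take; case: ltnP.
move: cs; set X := count _ _; lia.
Qed.

Lemma nth_ub (R : realDomainType) (L : seq R) (t : R) j :
  sorted (fun x y => y <= x) L -> (j < size L)%N ->
  (size L - j <= count (fun v => (v <= t)%R) L)%N -> nth 0 L j <= t.
Proof.
move=> so jL cnt; rewrite leNgt; apply/negP => lt.
move: cnt; rewrite -[L in count _ L](cat_take_drop j.+1) count_cat.
have -> : count (fun v => (v <= t)%R) (take j.+1 L) = 0%N.
  apply/eqP; rewrite -leqn0 leqNgt -has_count; apply/hasPn => v.
  move=> /(nthP 0) [q qs <-]; rewrite nth_take -?ltNge.
    rewrite size_take in qs.
    apply: lt_le_trans lt _; apply: sorted_ge_nth => //; move: qs; case: ifP; lia.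
  move: qs; rewrite size_take; case: ifP; lia.
have cs : (count (fun v => (v <= t)%R) (drop j.+1 L) <= size L - j.+1)%N.
  by rewrite (leq_trans (count_size _ _)) // size_drop.
move: cs; set X := count _ _; lia.
Qed.
Lemma char_poly_sim (F : fieldType) n (P B : 'M[F]_n) : P \in unitmx ->
  char_poly (invmx P *m B *m P) = char_poly B.
Proof.
move=> Pu.
rewrite /char_poly.
have -> : char_poly_mx (invmx P *m B *m P) =
   map_mx polyC (invmx P) *m char_poly_mx B *m map_mx polyC P.
  rewrite /char_poly_mx mulmxBr mulmxBl -!map_mxM mul_mx_scalar -scalemxAl.
  rewrite -map_mxM mulVmx // map_mx1 scalemx1.
  done.
rewrite !det_mulmx mulrC mulrA -det_mulmx -map_mxM mulmxV // map_mx1 det1 mul1r.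
done.
Qed.

Lemma eig_diag (R : rcfType) n (P : 'M[R[i]]_n) (d : 'rV[R[i]]_n) : P \in unitmx ->
  perm_eq (eigenvalues_seq (invmx P *m diag_mx d *m P)) [seq d 0 i | i <- enum 'I_n].
Proof.
move=> Pu; rewrite /eigenvalues_seq.
case: closed_field_poly_normal => r /= h.
rewrite (monicP (char_poly_monic _)) scale1r in h.
rewrite char_poly_sim // char_poly_trig ?diag_mx_is_trig // in h.
apply: prod_XsubC_eq; rewrite -h big_map big_enum /=.
apply: eq_bigr => i _; rewrite mxE eqxx mulr1n //.
Qed.
Lemma cnt_card (T : finType) (P : pred T) : count P (enum T) = #|[set x | P x]|.
Proof.
rewrite cardsE cardE -size_filter /enum_mem.
by congr size; rewrite -filter_predI; apply: eq_filter => x; rewrite /= ?inE ?andbT.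
Qed.
Lemma mid_lst chi (q : 'I_chi) : (mid q == lst chi) = false.
Proof. by rewrite -val_eqE /=; apply/eqP; have := ltn_ord q; lia. Qed.

Lemma conjC_realc (R : rcfType) (r : R) : conjC (r%:C)%C = (r%:C)%C.
Proof. by apply: conj_Creal; apply/complex_realP; exists r. Qed.

Lemma adjE (R : rcfType) m n (M : 'M[R[i]]_(m, n)) r c : adjmx M r c = conjC (M c r).
Proof. by rewrite /adjmx !mxE. Qed.

Lemma y_mid (R : rcfType) chi NR NL (s : 'I_chi -> R) pR pL (x : 'rV[R[i]]_(1 + chi + 1)) q :
  (x *m adjmx (transfer_mx NR NL s pR pL)) 0 (mid q) =
  x 0 (mid q) * (s q)%:C%C + x 0 (lst chi) * conjC (pL q 0).
Proof.
rewrite mxE (bigD1 (mid q)) //= (bigD1 (lst chi)) /=; last by rewrite eq_sym mid_lst.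
rewrite big1 ?addr0 => [|r /andP [r1 r2]].
  by rewrite !adjE !M_mid eqxx eq_sym mid_lst eqxx conjC_realc.
by rewrite !adjE M_mid (negbTE r1) (negbTE r2) conjC0 mulr0.
Qed.

Lemma y_lst (R : rcfType) chi NR NL (s : 'I_chi -> R) pR pL (x : 'rV[R[i]]_(1 + chi + 1)) :
  (x *m adjmx (transfer_mx NR NL s pR pL)) 0 (lst chi) =
  x 0 (lst chi) * NL%:C%C.
Proof.
rewrite mxE (bigD1 (lst chi)) //= big1 ?addr0 => [|r r1].
  by rewrite !adjE M_lst eqxx conjC_realc.
by rewrite !adjE M_lst (negbTE r1) conjC0 mulr0.
Qed.
Lemma adjmxE (R : rcfType) m n (M : 'M[R[i]]_(m, n)) : adjmx M = M^H.
Proof. by []. Qed.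

Theorem mainTheorem5 (R : rcfType) (chi : nat) (NR NL : R) (s : 'I_chi -> R)
    (pR : 'rV[R[i]]_chi) (pL : 'cV[R[i]]_chi) :
  (3 <= chi)%N ->
  (forall i j : 'I_chi, (i <= j)%N -> s j <= s i) ->
  (forall i : 'I_chi, 0 <= s i) ->
  forall i k : 'I_chi, nat_of_ord k = (nat_of_ord i).+2 ->
    s k <= nth 0 (singular_values (transfer_mx NR NL s pR pL)) (i.+2) /\
    nth 0 (singular_values (transfer_mx NR NL s pR pL)) (i.+2) <= s i.
Proof.
move=> chi3 mono pos i k hk.
set M := transfer_mx NR NL s pR pL.
set A := adjmx M *m M.
have An : A \is normalmx.
  apply/normalmxP.
  have -> : A^H = A by rewrite /A adjmxE trmx_mul map_mxM trmxCK.
  by [].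
have Aeq : A = invmx (spectralmx A) *m diag_mx (spectral_diag A) *m spectralmx A.
  exact/orthomx_spectralP.
have Pu := spectral_unitarymx A.
set P := spectralmx A in Aeq Pu.
set d := spectral_diag A in Aeq.
have QE : forall x : 'rV[R[i]]_(1 + chi + 1), (x *m A *m x^H) 0 0 = \sum_j `|(x *m adjmx M) 0 j| ^+ 2.
  by move=> x; rewrite /A adjmxE qA normsq.
have QD : forall x : 'rV[R[i]]_(1 + chi + 1), (x *m A *m x^H) 0 0 = \sum_j d 0 j * `|(x *m P^H) 0 j| ^+ 2.
  by move=> x; rewrite {1}Aeq quad_diag.
have dge0 : forall j, 0 <= d 0 j.
  move=> j; pose x := (delta_mx (0 : 'I_1) j : 'rV[R[i]]_(1 + chi + 1)) *m P.
  have xP : x *m P^H = delta_mx (0 : 'I_1) j by rewrite /x mulmxtVK.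
  have := QD x; rewrite QE xP [X in _ = X](bigD1 j) //= [X in _ = _ + X]big1 ?addr0 => [|l lj]; last first.
    by rewrite mxE (negbTE lj) andbF normr0 expr0n mulr0.
  rewrite mxE !eqxx normr1 expr1n mulr1 => <-.
  by apply: sumr_ge0 => l _; apply: exprn_ge0.
have dreal : forall j, d 0 j \is Num.real by move=> j; apply: ger0_real.
pose e := fun j => complex.Re (d 0 j).
have de : forall j, d 0 j = (e j)%:C%C by move=> j; rewrite /e RRe_real.
have ege0 : forall j, 0 <= e j by move=> j; rewrite -ler0c -de.
have Lperm : perm_eq (singular_values M) [seq Num.sqrt (e j) | j <- enum 'I_(1 + chi + 1)].
  rewrite /singular_values perm_sort -/A {1}Aeq.
  have -> : [seq Num.sqrt (e j) | j <- enum 'I_(1 + chi + 1)] =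
    [seq Num.sqrt (complex.Re z) | z <- [seq d 0 j | j <- enum 'I_(1 + chi + 1)]].
    by rewrite -[RHS]map_comp.
  apply: perm_map; apply: eig_diag.
  exact: unitarymx_unit.
have cntL : forall p : pred R, count p (singular_values M) = #|[set j | p (Num.sqrt (e j))]|.
  by move=> p; rewrite (permP Lperm) count_map cnt_card.
have sizeL : size (singular_values M) = (1 + chi + 1)%N.
  by rewrite (perm_size Lperm) size_map size_enum_ord.
have soL : sorted (fun x y => y <= x) (singular_values M).
  by apply: sort_sorted => x y; apply: le_total.
have ltk := ltn_ord k.
have lti := ltn_ord i.
split.
- apply: nth_lb => //; first by rewrite sizeL; lia.
  rewrite cntL.
  pose m := (chi.+1 - k)%N.
  pose f1 := fun v : nat => if v == 0%N then 0%N else (v + k + 1)%N.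
  pose G : 'M[R[i]]_(1 + chi + 1, m) := \matrix_(r, c) ((nat_of_ord r == f1 (nat_of_ord c))%:R).
  have creal : ((s k ^+ 2)%:C)%C \is Num.real by apply/complex_realP; eexists.
  have := @core _ _ _ P d ((s k ^+ 2)%:C)%C G Pu dreal creal.
  have hyp : forall x : 'rV[R[i]]_(1 + chi + 1), x *m G = 0 ->
     ((s k ^+ 2)%:C)%C * (x *m x^H) 0 0 <= (x *m (invmx P *m diag_mx d *m P) *m x^H) 0 0.
    move=> x xG.
    have zx : forall r : 'I_(1 + chi + 1), (nat_of_ord r == 0%N) || (k.+2 <= nat_of_ord r)%N -> x 0 r = 0.
      move=> r hr.
      have ltc : ((if nat_of_ord r == 0%N then 0 else nat_of_ord r - k - 1) < m)%N.
        have := ltn_ord r; rewrite /m; case: eqP => _; lia.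
      have h := @ker_col _ _ _ G x (Ordinal ltc) (f1 (if nat_of_ord r == 0%N then 0 else nat_of_ord r - k - 1)%N) r.
      apply: h.
      + by move=> r'; rewrite mxE.
      + by rewrite xG mxE.
      + have -> : val r = nat_of_ord r by [].
        rewrite /f1; move: hr; case: (nat_of_ord r =P 0%N) => [e0|ne] /= hr; first by rewrite e0.
        rewrite ifN; first lia. apply/eqP; lia.
    rewrite -Aeq QE normsq mulr_sumr; apply: ler_sum => c _.
    case: (@ord_cases chi c) => [->|[[q ->]|->]].
    + rewrite (zx (fst chi)) // normr0 expr0n mulr0; exact: exprn_ge0.
    + rewrite y_mid (zx (lst chi)) /=; last by lia.
      rewrite mul0r addr0 normrM exprMn.
      case: (leqP q k) => qk.
        rewrite mulrC; apply: ler_wpM2l; first exact: exprn_ge0.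
        rewrite ger0_norm ?ler0c // -rmorphXn lecR.
        have := mono q k qk; have := pos k; nra.
      rewrite (zx (mid q)) /=; last by rewrite /=; lia.
      by rewrite normr0 expr0n !mulr0 mul0r.
    + rewrite (zx (lst chi)) /=; last by rewrite /=; lia.
      rewrite normr0 expr0n mulr0; exact: exprn_ge0.
  move=> /(_ hyp).
  have -> : [set j | ((s k ^+ 2)%:C)%C <= d 0 j] = [set j | s k <= Num.sqrt (e j)].
    apply/setP => j; rewrite !inE de lecR.
    by rewrite -[s k in RHS](ger0_norm (pos k)) -sqrtr_sqr ler_sqrt.
  rewrite /m; set X := #|_|; lia.
- apply: nth_ub => //; first by rewrite sizeL; lia.
  rewrite cntL sizeL.
  pose f2 := fun v : nat => if v == 0%N then chi.+1 else v.-1.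
  pose G : 'M[R[i]]_(1 + chi + 1, k) := \matrix_(r, c)
     (if nat_of_ord c == 1%N then adjmx M r (fst chi) else (nat_of_ord r == f2 (nat_of_ord c))%:R).
  have creal : (- (s i ^+ 2)%:C)%C \is Num.real by rewrite realN; apply/complex_realP; eexists.
  have dreal' : forall j, (- d) 0 j \is Num.real by move=> j; rewrite mxE realN.
  have := @core _ _ _ P (- d) (- (s i ^+ 2)%:C)%C G Pu dreal' creal.
  have hyp : forall x : 'rV[R[i]]_(1 + chi + 1), x *m G = 0 ->
     (- (s i ^+ 2)%:C)%C * (x *m x^H) 0 0 <= (x *m (invmx P *m diag_mx (- d) *m P) *m x^H) 0 0.
    move=> x xG.
    rewrite diag_mxN' mulmxN mulNmx -Aeq mulmxN mulNmx [X in _ <= X]mxE mulNr lerN2.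
    have zx : forall r : 'I_(1 + chi + 1),
        (nat_of_ord r == chi.+1) || ((1 <= nat_of_ord r) && (nat_of_ord r <= i))%N -> x 0 r = 0.
      move=> r hr.
      have ltc : ((if nat_of_ord r == chi.+1 then 0 else (nat_of_ord r).+1) < k)%N.
        move: hr; case: eqP => _; lia.
      have h := @ker_col _ _ _ G x (Ordinal ltc)
         (f2 (if nat_of_ord r == chi.+1 then 0 else (nat_of_ord r).+1)%N) r.
      apply: h.
      + move=> r'; rewrite mxE /=; case: eqP => [e1|] //.
        move: hr e1; case: eqP => _; lia.
      + by rewrite xG mxE.
      + have -> : val r = nat_of_ord r by [].
        rewrite /f2; move: hr; case: (nat_of_ord r =P chi.+1) => [e0|ne] /= hr; first by rewrite e0.
        by [].
    have y0 : (x *m adjmx M) 0 (fst chi) = 0.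
      have lt1 : (1 < k)%N by lia.
      have := congr1 (fun X : 'M_(1, k) => X 0 (Ordinal lt1)) xG.
      rewrite /= !mxE => h; rewrite -[RHS]h; apply: eq_bigr => r _; by rewrite /G [in RHS]mxE /= !mxE.
    rewrite QE normsq mulr_sumr; apply: ler_sum => c _.
    case: (@ord_cases chi c) => [->|[[q ->]|->]].
    + rewrite y0 normr0 expr0n; apply: mulr_ge0; last exact: exprn_ge0.
      by rewrite ler0c sqr_ge0.
    + rewrite y_mid (zx (lst chi)) /=; last by lia.
      rewrite mul0r addr0 normrM exprMn.
      case: (leqP i q) => qi.
        rewrite [X in _ <= X]mulrC; apply: ler_wpM2l; first exact: exprn_ge0.
        rewrite ger0_norm ?ler0c // -rmorphXn lecR.
        have := mono i q qi; have := pos q; nra.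
      rewrite (zx (mid q)) /=; last by lia.
      by rewrite normr0 expr0n !mulr0 mul0r.
    + rewrite y_lst (zx (lst chi)) /=; last by lia.
      by rewrite mul0r normr0 expr0n mulr0.
  move=> /(_ hyp).
  have -> : [set j | (- (s i ^+ 2)%:C)%C <= (- d) 0 j] = [set j | Num.sqrt (e j) <= s i].
    apply/setP => j; rewrite !inE mxE lerN2 de lecR.
    by rewrite -[s i in RHS](ger0_norm (pos i)) -sqrtr_sqr ler_sqrt // exprn_ge0.
  set X := #|_|; lia.
Qed.
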